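(* For $x\in\mathbb{C}\setminus\{0,1\}$ in a small open set, consider the elliptic curve $v^2=u(u-1)(u-x)$. Let $\mathcal{A},\mathcal{B}$ be generators of its first homology, transported continuously in $x$ and avoiding the branch points and infinity. Let $\gamma=c_1\mathcal{A}+c_2\mathcal{B}$ with constants $c_1,c_2$. Set $$a_1=\oint_\gamma\frac{du}{uv},\qquad a_2=\oint_\gamma\frac{du}{(u-1)v}.$$ Then, wherever the denominator does not vanish, the function $$y(x)=\frac{x\,a_1}{x\,a_1+(x-1)\,a_2}=-\frac{x\oint_\gamma\frac{du}{uv}}{x\oint_\gamma\frac{du}{(u-x)v}+\oint_\gamma\frac{du}{(u-1)v}}$$ solves the Painlevé VI equation with parameters $(\hat\alpha,\hat\beta,\hat\gamma,\hat\delta)=(1/8,-1/8,1/8,3/8)$.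
   Context: The Painlevé VI equation with parameters $\hat\alpha,\hat\beta,\hat\gamma,\hat\delta$ is $$y''=\tfrac12\Big(\tfrac1y+\tfrac1{y-1}+\tfrac1{y-x}\Big)(y')^2-\Big(\tfrac1x+\tfrac1{x-1}+\tfrac1{y-x}\Big)y'+\frac{y(y-1)(y-x)}{x^2(x-1)^2}\Big(\hat\alpha+\hat\beta\frac{x}{y^2}+\hat\gamma\frac{x-1}{(y-1)^2}+\hat\delta\frac{x(x-1)}{(y-x)^2}\Big).$$ *)

(* Defs.v *)
From Stdlib Require Import Reals.
From Coquelicot Require Import Coquelicot.
Open Scope C_scope.

Definition Cint01 (f : R -> C) : C := @RInt C_R_CompleteNormedModule f 0%R 1%R.

Definition path_deriv (g : R -> C) (t : R) (l : C) : Prop :=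
  @is_derive R_AbsRing C_R_NormedModule g t l.

Definition ell_cubic (x u : C) : C := u * (u - 1) * (u - x).

(* A closed cycle on the affine curve v^2 = u(u-1)(u-x), for every parameter x in U:
   the u-projection is a fixed C^1 loop g (with derivative dg) avoiding the branch
   points 0, 1, x, and w x t is a continuous choice of v along it (the lift of the loop to the
   curve), depending continuously on (x,t), closing up: w x 0 = w x 1. *)
Record lifted_cycle (U : C -> Prop) := {
  lc_path : R -> C;
  lc_dpath : R -> C;
  lc_lift : C -> R -> C;
  lc_path_C1 : forall t : R, path_deriv lc_path t (lc_dpath t) /\ continuous lc_dpath t;
  lc_closed : lc_path 0%R = lc_path 1%R;
  lc_avoid : forall x t, U x -> (0 <= t <= 1)%R ->
      lc_path t <> 0 /\ lc_path t <> 1 /\ lc_path t <> x;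
  lc_lift_sq : forall x t, U x -> (0 <= t <= 1)%R ->
      lc_lift x t * lc_lift x t = ell_cubic x (lc_path t);
  lc_lift_cont : forall x t, U x -> (0 <= t <= 1)%R ->
      continuous (fun p : C * R => lc_lift (fst p) (snd p)) (x, t);
  lc_lift_closed : forall x, U x -> lc_lift x 0%R = lc_lift x 1%R
}.

Definition period {U : C -> Prop} (cy : lifted_cycle U) (e x : C) : C :=
  Cint01 (fun t => lc_dpath U cy t / ((lc_path U cy t - e) * lc_lift U cy x t)).

Definition PVI (al be ga de : C) (x y y1 y2 : C) : Prop :=
  y2 = / 2 * (/ y + / (y - 1) + / (y - x)) * (y1 * y1)
       - (/ x + / (x - 1) + / (y - x)) * y1
       + y * (y - 1) * (y - x) / (x * x * ((x - 1) * (x - 1)))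
         * (al + be * x / (y * y) + ga * (x - 1) / ((y - 1) * (y - 1))
            + de * x * (x - 1) / ((y - x) * (y - x))).

(* Main.v *)
Require Import Defs.
From Stdlib Require Import Reals.
From Coquelicot Require Import Coquelicot.
Open Scope C_scope.


From Stdlib Require Import Lra Classical ClassicalEpsilon.


Lemma scal_RC (r : R) (u : C) : @scal R_Ring C_R_ModuleSpace r u = RtoC r * u.
Proof. destruct u as [u1 u2]. unfold scal; simpl. unfold prod_scal, Cmult, RtoC; simpl.
  f_equal; unfold scal; simpl; unfold mult; simpl; ring. Qed.

Lemma norm_RC (u : C) : @norm R_AbsRing C_R_NormedModule u = Cmod u.
Proof. destruct u as [u1 u2]. unfold norm; simpl. unfold prod_norm, Cmod; simpl.
  unfold norm; simpl; unfold abs; simpl. assert (Hs : forall a, (Rabs a * (Rabs a * 1) = a * (a * 1))%R) by (intro a; rewrite !Rmult_1_r, <- Rabs_mult; apply Rabs_pos_eq; nra).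
  rewrite !Hs. reflexivity. Qed.

Lemma norm_CC (u : C) : @norm C_AbsRing C_NormedModule u = Cmod u.
Proof. reflexivity. Qed.

Lemma minus_C (u v : C) : @minus C_AbelianGroup u v = u - v.
Proof. reflexivity. Qed.

Lemma plus_C (u v : C) : @plus C_AbelianGroup u v = u + v.
Proof. reflexivity. Qed.

Lemma minus_RC (u v : C) : @minus C_R_NormedModule u v = u - v.
Proof. reflexivity. Qed.

Lemma plus_RC (u v : C) : @plus C_R_NormedModule u v = u + v.
Proof. reflexivity. Qed.

Lemma scal_CC (r u : C) : @scal C_Ring C_ModuleSpace r u = r * u.
Proof. reflexivity. Qed.

Lemma locC_abs (c : C) (P : C -> Prop) :
  @locally C_UniformSpace c P -> @locally (AbsRing_UniformSpace C_AbsRing) c P.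
Proof. intros [e He]. exists e. intros y Hy. apply He.
  apply C_NormedModule_mixin_compat1. exact Hy. Qed.

Lemma locabs_C (c : C) (P : C -> Prop) :
  @locally (AbsRing_UniformSpace C_AbsRing) c P -> @locally C_UniformSpace c P.
Proof. intros [e He].
  assert (Hp : (0 < e / sqrt 2)%R).
  { apply Rdiv_lt_0_compat. apply cond_pos. apply sqrt_lt_R0; lra. }
  exists (mkposreal _ Hp). intros y Hy. apply He.
  pose proof (C_NormedModule_mixin_compat2 c y (mkposreal _ Hp) Hy) as H. simpl in H.
  change (Cmod (minus y c) < e)%R.
  replace (pos e) with (sqrt 2 * (e / sqrt 2))%R. exact H.
  field. apply Rgt_not_eq, sqrt_lt_R0; lra. Qed.

Lemma contC_abs {T : UniformSpace} (f : T -> C) x :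
  @continuous T C_UniformSpace f x -> @continuous T (AbsRing_UniformSpace C_AbsRing) f x.
Proof. intros H P HP. apply H. apply locabs_C. exact HP. Qed.

Lemma contabs_C {T : UniformSpace} (f : T -> C) x :
  @continuous T (AbsRing_UniformSpace C_AbsRing) f x -> @continuous T C_UniformSpace f x.
Proof. intros H P HP. apply H. apply locC_abs. exact HP. Qed.

Section Cont.
Context {T : UniformSpace}.
Lemma Cont_mult (f g : T -> C) x : continuous f x -> continuous g x ->
  continuous (fun y => f y * g y) x.
Proof. intros Hf Hg. apply contabs_C.
  exact (continuous_mult (K:=C_AbsRing) f g x (contC_abs _ _ Hf) (contC_abs _ _ Hg)). Qed.
Lemma Cont_plus (f g : T -> C) x : continuous f x -> continuous g x ->
  continuous (fun y => f y + g y) x.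
Proof. exact (continuous_plus (V:=C_NormedModule) f g x). Qed.
Lemma Cont_opp (f : T -> C) x : continuous f x ->
  continuous (fun y => - f y) x.
Proof. exact (continuous_opp (V:=C_NormedModule) f x). Qed.
Lemma Cont_minus (f g : T -> C) x : continuous f x -> continuous g x ->
  continuous (fun y => f y - g y) x.
Proof. intros. apply Cont_plus; auto. apply Cont_opp; auto. Qed.
Lemma Cont_const (c : C) x : continuous (fun _ : T => c) x.
Proof. apply continuous_const. Qed.
End Cont.


Lemma Cmod_minus_sym (a b : C) : Cmod (a - b) = Cmod (b - a).
Proof. replace (a - b) with (- (b - a)) by ring. apply Cmod_opp. Qed.

Lemma Cont_Cinv_at (c : C) : c <> 0 -> continuous Cinv c.
Proof.
  intros Hc. apply contabs_C. apply (proj2 (filterlim_locally _ _)).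
  intros eps.
  assert (Hm : (0 < Cmod c)%R) by (apply Cmod_gt_0; exact Hc).
  set (m := Cmod c) in *.
  assert (Hd : (0 < Rmin (m/2) (eps*m*m/2))%R).
  { apply Rmin_pos. lra. pose proof (cond_pos eps). apply Rmult_lt_0_compat; [|lra].
    apply Rmult_lt_0_compat; [apply Rmult_lt_0_compat|]; lra. }
  apply locabs_C. exists (mkposreal _ Hd). intros y Hy.
  change (Cmod (y - c) < Rmin (m/2) (eps*m*m/2))%R in Hy.
  change (Cmod (/ y - / c) < eps)%R.
  assert (H1 : (Cmod (y - c) < m/2)%R) by (eapply Rlt_le_trans; [exact Hy| apply Rmin_l]).
  assert (H2 : (Cmod (y - c) < eps*m*m/2)%R) by (eapply Rlt_le_trans; [exact Hy| apply Rmin_r]).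
  assert (Hy0 : (m/2 < Cmod y)%R).
  { assert (Ht : (m <= Cmod (c - y) + Cmod y)%R).
    { unfold m. replace c with ((c - y) + y) at 1 by ring. apply Cmod_triangle. }
    rewrite Cmod_minus_sym in Ht. lra. }
  change C in y.
  assert (Hyn : y <> 0). { intro E. subst y. rewrite Cmod_0 in Hy0. lra. }
  replace (/ y - / c) with ((c - y) * / (y * c)) by (field; split; assumption).
  rewrite Cmod_mult, Cmod_inv, Cmod_mult by (apply Cmult_neq_0; assumption).
  fold m. rewrite Cmod_minus_sym.
  assert (Hp : (0 < Cmod y * m)%R) by nra.
  apply (Rmult_lt_reg_r (Cmod y * m)); [exact Hp|].
  rewrite Rmult_assoc, Rinv_l by lra. pose proof (cond_pos eps). assert (eps * (m/2) * m < eps * Cmod y * m)%R by (apply Rmult_lt_compat_r; [lra| apply Rmult_lt_compat_l; lra]). nra.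
Qed.

Lemma Cont_inv {T : UniformSpace} (f : T -> C) x : continuous f x -> f x <> 0 ->
  continuous (fun y => / f y) x.
Proof. intros Hf Hn. apply (continuous_comp f Cinv). exact Hf. apply Cont_Cinv_at; exact Hn. Qed.

Lemma Cont_div {T : UniformSpace} (f g : T -> C) x : continuous f x -> continuous g x -> g x <> 0 ->
  continuous (fun y => f y / g y) x.
Proof. intros. unfold Cdiv. apply Cont_mult; auto. apply Cont_inv; auto. Qed.

Lemma loc_nonzero {T : UniformSpace} (f : T -> C) x : continuous f x -> f x <> 0 ->
  locally x (fun y => f y <> 0).
Proof.
  intros Hf Hn. apply contC_abs in Hf.
  assert (Hm : (0 < Cmod (f x))%R) by (apply Cmod_gt_0; exact Hn).
  generalize (proj1 (filterlim_locally _ _) Hf (mkposreal _ Hm)).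
  apply filter_imp. intros y Hy E. change (Cmod (f y - f x) < Cmod (f x))%R in Hy.
  rewrite E in Hy. replace (0 - f x) with (- f x) in Hy by ring. rewrite Cmod_opp in Hy. lra.
Qed.


Lemma deriv_domin {K : AbsRing} {V : NormedModule K} (f : K -> V) x l :
  (forall eps : posreal, locally x (fun y => norm (minus (minus (f y) (f x)) (scal (minus y x) l)) <= eps * norm (minus y x))%R) ->
  is_derive f x l.
Proof.
  intros H. split. apply is_linear_scal_l.
  intros x' Hx'. apply (is_filter_lim_locally_unique (V:=AbsRing_NormedModule K)) in Hx'. subst x'. exact H.
Qed.

Lemma domin_deriv {K : AbsRing} {V : NormedModule K} (f : K -> V) x l :
  is_derive f x l ->
  (forall eps : posreal, locally x (fun y => norm (minus (minus (f y) (f x)) (scal (minus y x) l)) <= eps * norm (minus y x))%R).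
Proof.
  intros [_ H] eps. apply (H x). intros P HP. exact HP.
Qed.

Lemma ag_aux {G : AbelianGroup} (a b c : G) : plus (plus (plus a b) (opp a)) (opp c) = plus b (opp c).
Proof. rewrite (plus_comm a b), <- (plus_assoc b a), plus_opp_r, plus_zero_r. reflexivity. Qed.

Lemma ag_aux2 {G : AbelianGroup} (a b c : G) : minus (minus (plus a b) a) c = minus b c.
Proof. unfold minus. apply ag_aux. Qed.

Lemma mod_aux {K : Ring} {V : ModuleSpace K} (a b c : V) (d : K) :
  minus (minus (plus a (scal d b)) a) (scal d c) = scal d (minus b c).
Proof. rewrite scal_minus_distr_l. exact (ag_aux2 (G := ModuleSpace.AbelianGroup K V) a (scal d b) (scal d c)). Qed.

Lemma carath {K : AbsRing} {V : NormedModule K} (f Phi : K -> V) x :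
  locally x (fun z => f z = plus (f x) (scal (minus z x) (Phi z))) ->
  continuous Phi x -> is_derive f x (Phi x).
Proof.
  intros Heq Hc. apply deriv_domin. intros eps.
  assert (Hp : (0 < eps / norm_factor (V:=V))%R).
  { apply Rdiv_lt_0_compat. apply cond_pos. apply norm_factor_gt_0. }
  generalize (proj1 (filterlim_locally _ _) Hc (mkposreal _ Hp)).
  intros Hb. generalize (filter_and _ _ Heq Hb). apply filter_imp.
  intros z [Hz Hb']. apply norm_compat2 in Hb'. simpl in Hb'.
  replace (norm_factor * (eps / norm_factor))%R with (pos eps) in Hb'
    by (field; apply Rgt_not_eq, norm_factor_gt_0).
  rewrite Hz.
  replace (minus (minus (plus (f x) (scal (minus z x) (Phi z))) (f x)) (scal (minus z x) (Phi x)))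
    with (scal (minus z x) (minus (Phi z) (Phi x))).
  2:{ symmetry. exact (mod_aux (K:=AbsRing.Ring K) (V:=NormedModule.ModuleSpace K V) (f x) (Phi z) (Phi x) (minus z x)). }
  eapply Rle_trans. apply norm_scal.
  change (norm (minus z x)) with (abs (minus z x)).
  rewrite (Rmult_comm eps). apply Rmult_le_compat_l. apply abs_ge_0. lra.
Qed.

Lemma carathR (f Phi : R -> C) t :
  locally t (fun s => f s = f t + RtoC (s - t) * Phi s) -> continuous Phi t ->
  @is_derive R_AbsRing C_R_NormedModule f t (Phi t).
Proof.
  intros H Hc. apply (carath (K:=R_AbsRing) (V:=C_R_NormedModule)); [|exact Hc].
  generalize H; apply filter_imp. intros s Hs. rewrite Hs. rewrite <- scal_RC. reflexivity.
Qed.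

Lemma carathC (f Phi : C -> C) x :
  locally x (fun z => f z = f x + (z - x) * Phi z) -> continuous Phi x ->
  is_derive f x (Phi x).
Proof.
  intros H Hc. apply (carath (K:=C_AbsRing) (V:=C_NormedModule)).
  - apply locC_abs. exact H.
  - intros P HP. apply locC_abs. apply Hc. exact HP.
Qed.

Lemma carath_convR (g : R -> C) t l : @is_derive R_AbsRing C_R_NormedModule g t l ->
  exists Gam : R -> C, continuous Gam t /\ Gam t = l /\ forall s, g s = g t + RtoC (s - t) * Gam s.
Proof.
  intros Hd.
  exists (fun s => if Req_EM_T s t then l else RtoC (/(s-t)) * (g s - g t)).
  split; [|split].
  - apply (proj2 (filterlim_locally _ _)). intros eps.
    assert (He2 : (0 < eps/2)%R) by (pose proof (cond_pos eps); lra).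
    generalize (domin_deriv _ _ _ Hd (mkposreal _ He2)). apply filter_imp.
    intros s Hs. simpl in Hs.
    change (@norm R_AbsRing C_R_NormedModule ((g s - g t)%C - @scal R_Ring C_R_ModuleSpace (s-t)%R l)%C <= eps/2 * Rabs (s-t))%R in Hs.
    rewrite norm_RC, scal_RC in Hs.
    destruct (Req_EM_T t t) as [_|N]; [|congruence].
    destruct (Req_EM_T s t) as [E|N].
    + apply ball_center.
    + apply C_NormedModule_mixin_compat1.
      change (Cmod (RtoC (/ (s - t)) * (g s - g t) - l) < eps)%R.
      assert (Hst : (s - t <> 0)%R) by lra.
      replace (RtoC (/ (s - t)) * (g s - g t) - l) with
        (RtoC (/ (s - t)) * (g s - g t - RtoC (s - t) * l)).
      2:{ rewrite RtoC_inv by exact Hst. field. intro E; apply Hst; apply (f_equal fst) in E; simpl in E; exact E. }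
      rewrite Cmod_mult, Cmod_R.
      rewrite Rabs_inv.
      assert (Ha : (0 < Rabs (s - t))%R) by (apply Rabs_pos_lt; exact Hst).
      apply (Rmult_lt_reg_l (Rabs (s - t))); [exact Ha|].
      rewrite <- Rmult_assoc, Rinv_r by lra. pose proof (cond_pos eps). nra.
  - destruct (Req_EM_T t t); [reflexivity| congruence].
  - intros s. destruct (Req_EM_T s t) as [E|N].
    + subst s. replace (t - t)%R with 0%R by ring. ring.
    + rewrite Cmult_assoc, <- RtoC_mult, Rinv_r by lra. ring.
Qed.


Lemma Cont_id {T : UniformSpace} x : continuous (fun y : T => y) x.
Proof. apply continuous_id. Qed.

Lemma Dconst (c x : C) : is_derive (fun _ : C => c) x (RtoC 0).
Proof. exact (is_derive_const (K:=C_AbsRing) (V:=C_NormedModule) c x). Qed.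
Lemma Dval (f : C -> C) (x a b : C) : is_derive f x a -> a = b -> is_derive f x b.
Proof. intros H E; subst; exact H. Qed.

Lemma Did (x : C) : is_derive (fun z : C => z) x (RtoC 1).
Proof. assert (H : forall z : C, z = x + (z - x) * RtoC 1) by (intros z; ring).
  apply (carathC (fun z => z) (fun _ => RtoC 1)). apply filter_forall. exact H. apply Cont_const. Qed.
Lemma Dplus (f g : C -> C) x a b : is_derive f x a -> is_derive g x b ->
  is_derive (fun z => f z + g z) x (a + b).
Proof. exact (is_derive_plus (K:=C_AbsRing) (V:=C_NormedModule) f g x a b). Qed.
Lemma isd_C_abs (f : C -> C) x a : @is_derive C_AbsRing C_NormedModule f x a -> @is_derive C_AbsRing (AbsRing_NormedModule C_AbsRing) f x a.
Proof. intros [Hl Hd]. split. - apply is_linear_scal_l. - intros y Hy eps. generalize (Hd y Hy eps). apply filter_imp. intros z Hz. exact Hz. Qed.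
Lemma isd_abs_C (f : C -> C) x a : @is_derive C_AbsRing (AbsRing_NormedModule C_AbsRing) f x a -> @is_derive C_AbsRing C_NormedModule f x a.
Proof. intros [Hl Hd]. split. - apply is_linear_scal_l. - intros y Hy eps. generalize (Hd y Hy eps). apply filter_imp. intros z Hz. exact Hz. Qed.

Lemma Dmult (f g : C -> C) x a b : is_derive f x a -> is_derive g x b ->
  is_derive (fun z => f z * g z) x (a * g x + f x * b).
Proof. intros Hf Hg. apply isd_abs_C. exact (is_derive_mult (K:=C_AbsRing) f g x a b (isd_C_abs _ _ _ Hf) (isd_C_abs _ _ _ Hg) Cmult_comm). Qed.
Lemma Dopp (f : C -> C) x a : is_derive f x a -> is_derive (fun z => - f z) x (- a).
Proof. exact (is_derive_opp (K:=C_AbsRing) (V:=C_NormedModule) f x a). Qed.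
Lemma Dminus (f g : C -> C) x a b : is_derive f x a -> is_derive g x b ->
  is_derive (fun z => f z - g z) x (a - b).
Proof. intros. apply Dplus; auto. apply Dopp; auto. Qed.
Lemma Dcomp (f g : C -> C) x a b : is_derive f (g x) a -> is_derive g x b ->
  is_derive (fun z => f (g z)) x (b * a).
Proof. intros Hf Hg. exact (is_derive_comp (K:=C_AbsRing) (V:=C_NormedModule) f g x a b Hf (isd_C_abs _ _ _ Hg)). Qed.

Lemma DCinv (c : C) : c <> 0 -> is_derive Cinv c (- / (c * c)).
Proof.
  intros Hc.
  assert (Hl : locally c (fun z : C => z <> 0)).
  { apply (loc_nonzero (fun z : C => z)). apply Cont_id. exact Hc. }
  apply (carathC Cinv (fun z => - / (z * c))).
  - generalize Hl; apply filter_imp. intros z Hz. field. split; assumption.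
  - apply Cont_opp. apply Cont_inv. apply Cont_mult. apply Cont_id. apply Cont_const.
    apply Cmult_neq_0; assumption.
Qed.

Lemma Dinv (f : C -> C) x a : is_derive f x a -> f x <> 0 ->
  is_derive (fun z => / f z) x (- a / (f x * f x)).
Proof.
  intros Hf Hn. eapply Dval. apply (Dcomp Cinv f x (- / (f x * f x)) a); [apply DCinv; exact Hn | exact Hf].
  field. exact Hn.
Qed.

Lemma Ddiv (f g : C -> C) x a b : is_derive f x a -> is_derive g x b -> g x <> 0 ->
  is_derive (fun z => f z / g z) x ((a * g x - f x * b) / (g x * g x)).
Proof.
  intros Hf Hg Hn. eapply Dval. apply Dmult. exact Hf. apply Dinv. exact Hg. exact Hn.
  simpl. field. exact Hn.
Qed.


Lemma pvi_alg (x A B : C) : x <> 0 -> x - 1 <> 0 -> A <> 0 -> B <> 0 -> A + B <> 0 ->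
  x * A + (x - 1) * B <> 0 ->
  PVI (/ 8) (- / 8) (/ 8) (3 / 8) x (x * A / (x * A + (x - 1) * B))
    ((x * (A * A) - (x - 1) * (B * B)) / (2 * ((x * A + (x - 1) * B) * (x * A + (x - 1) * B))))
    (((B * B - A * A) * (x * A + (x - 1) * B) + (x * (A * A) - (x - 1) * (B * B)) * (A + B))
       / (2 * ((x * A + (x - 1) * B) * ((x * A + (x - 1) * B) * (x * A + (x - 1) * B))))).
Proof.
  intros Hx Hx1 HA HB HAB HD. unfold PVI.
  set (D := x * A + (x - 1) * B) in *.
  assert (E1 : x * A / D - 1 = - ((x - 1) * B) / D) by (unfold D; field; exact HD).
  assert (E2 : x * A / D - x = - (x * (x - 1) * (A + B)) / D) by (unfold D; field; exact HD).
  rewrite E1, E2. unfold D. field.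
  cbv beta. unfold D in HD. repeat split; assumption.
Qed.

Lemma sub1_neq (z : C) : z <> 1 -> z - 1 <> 0.
Proof. intros H E. apply H. replace z with ((z - 1) + 1) by ring. rewrite E. ring. Qed.

Lemma C2_neq0 : RtoC 2 <> 0.
Proof. intro E. apply (f_equal fst) in E. simpl in E. lra. Qed.

Lemma final_alg (V : C -> Prop) (a1 a2 : C -> C) (HV : open V)
  (HV01 : forall z, V z -> z <> 0 /\ z <> 1)
  (Ha1 : forall z, V z -> is_derive a1 z (- (2 * a1 z + a2 z) / (2 * z)))
  (Ha2 : forall z, V z -> is_derive a2 z (- (a1 z + 2 * a2 z) / (2 * (z - 1))))
  (x : C) (Vx : V x) (HD : x * a1 x + (x - 1) * a2 x <> 0) :
  let y := fun x => x * a1 x / (x * a1 x + (x - 1) * a2 x) in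
  exists y1 y2 : C,
      is_derive y x y1 /\
      (exists dy : C -> C,
         locally x (fun z => is_derive y z (dy z)) /\
         is_derive dy x y2) /\
      (y x <> 0 -> y x <> 1 -> y x <> x ->
         PVI (/ 8) (- / 8) (/ 8) (3 / 8) x (y x) y1 y2).
Proof.
  intros y.
  set (D := fun z => z * a1 z + (z - 1) * a2 z).
  set (dy := fun z => (z * (a1 z * a1 z) - (z - 1) * (a2 z * a2 z)) / (2 * (D z * D z))).
  assert (HDd : forall z, V z -> is_derive D z (- (a1 z + a2 z) / 2)).
  { intros z Vz. destruct (HV01 z Vz) as [Hz0 Hz1]. pose proof (sub1_neq z Hz1) as Hz1'.
    eapply Dval. apply Dplus. apply Dmult. apply Did. apply Ha1; exact Vz.
    apply Dmult. apply Dminus. apply Did. apply Dconst. apply Ha2; exact Vz.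
    simpl. field. split; assumption. }
  assert (Hyd : forall z, V z -> D z <> 0 -> is_derive y z (dy z)).
  { intros z Vz Dz. destruct (HV01 z Vz) as [Hz0 Hz1]. pose proof (sub1_neq z Hz1) as Hz1'.
    unfold y, dy. eapply Dval. apply Ddiv. apply Dmult. apply Did. apply Ha1; exact Vz.
    apply (HDd z Vz). exact Dz.
    simpl. unfold D in *. field. repeat split; assumption. }
  assert (HDc : @continuous C_UniformSpace C_UniformSpace D x).
  { pose proof (ex_derive_continuous (K:=C_AbsRing) (V:=C_NormedModule) D x (ex_intro _ _ (HDd x Vx))) as Hc.
    intros P HP. apply locabs_C. apply Hc. exact HP. }
  destruct (HV01 x Vx) as [Hx0 Hx1]. pose proof (sub1_neq x Hx1) as Hx1'.
  exists (dy x).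
  exists (((a2 x * a2 x - a1 x * a1 x) * D x + (x * (a1 x * a1 x) - (x - 1) * (a2 x * a2 x)) * (a1 x + a2 x))
       / (2 * (D x * (D x * D x)))).
  split; [|split].
  - apply Hyd; assumption.
  - exists dy. split.
    + generalize (filter_and _ _ (HV x Vx) (loc_nonzero D x HDc HD)). apply filter_imp.
      intros z [Vz Dz]. apply Hyd; assumption.
    + unfold dy. eapply Dval. apply Ddiv.
      apply Dminus. apply Dmult. apply Did. apply Dmult; apply Ha1; exact Vx.
      apply Dmult. apply Dminus. apply Did. apply Dconst. apply Dmult; apply Ha2; exact Vx.
      apply Dmult. apply Dconst. apply Dmult; apply HDd; exact Vx.
      apply Cmult_neq_0. apply C2_neq0. apply Cmult_neq_0; exact HD.
      simpl. unfold D in *. field. repeat split; try assumption.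
  - intros Hy0 Hy1 Hyx.
    assert (Eyx : y x = x * a1 x / D x) by reflexivity.
    rewrite Eyx in *.
    assert (HA : a1 x <> 0). { intro E. apply Hy0. rewrite E. field. exact HD. }
    assert (HB : a2 x <> 0).
    { intro E. apply Hy1. replace (x * a1 x / D x) with (1 + (-(x - 1) * a2 x) / D x)
        by (unfold D in *; field; exact HD). rewrite E. field. exact HD. }
    assert (HAB : a1 x + a2 x <> 0).
    { intro E. apply Hyx. replace (x * a1 x / D x) with (x + (-(x * (x - 1)) * (a1 x + a2 x)) / D x)
        by (unfold D in *; field; exact HD). rewrite E. field. exact HD. }
    unfold dy, D in *. apply pvi_alg; assumption.
Qed.


Lemma unif_cont (Phi : C -> R -> C) (x : C) :
  (forall t, (0 <= t <= 1)%R -> continuous (fun p : C * R => Phi (fst p) (snd p)) (x, t)) ->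
  forall eps : posreal, locally x (fun z => forall t, (0 <= t <= 1)%R -> ball (Phi x t) eps (Phi z t)).
Proof.
  intros Hc eps.
  assert (He2 : (0 < eps / 2)%R) by (pose proof (cond_pos eps); lra).
  assert (Hd : forall t, exists d : posreal, (0 <= t <= 1)%R ->
     forall z s, ball x d z -> ball t d s -> ball (Phi x t) (eps/2) (Phi z s)).
  { intros t. destruct (Rle_dec 0 t) as [H0|H0]; [destruct (Rle_dec t 1) as [H1|H1]|].
    - destruct (Hc t (conj H0 H1) (ball (Phi x t) (mkposreal _ He2)) (locally_ball _ _)) as [d Hd].
      exists d. intros _ z s Hz Hs. apply (Hd (z, s)). split; assumption.
    - exists (mkposreal 1 Rlt_0_1). intros [_ H]; lra.
    - exists (mkposreal 1 Rlt_0_1). intros [H _]; lra. }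
  destruct (choice _ Hd) as [delta Hdelta].
  destruct (compactness_value_1d 0 1 delta) as [d Hcomp].
  exists d. intros z Hz t Ht.
  apply NNPP. intro Hnot. apply (Hcomp t Ht). intros [t0 [Ht0 [Hdist Hle]]]. apply Hnot.
  assert (Hb : ball t0 (delta t0) t).
  { change (Rabs (t - t0) < delta t0)%R. exact Hdist. }
  assert (H1 : ball (Phi x t0) (eps/2) (Phi z t)).
  { apply (Hdelta t0 Ht0). apply (ball_le x d). exact Hle. exact Hz. exact Hb. }
  assert (H2 : ball (Phi x t0) (eps/2) (Phi x t)).
  { apply (Hdelta t0 Ht0). apply ball_center. exact Hb. }
  replace (pos eps) with (eps/2 + eps/2)%R by field.
  apply ball_triangle with (Phi x t0). apply ball_sym. exact H2. exact H1.
Qed.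

Lemma RS_Cmult (c : C) (f : R -> C) (ptd : SF_seq) :
  @Riemann_sum C_R_ModuleSpace (fun t => c * f t) ptd = c * @Riemann_sum C_R_ModuleSpace f ptd.
Proof.
  apply SF_cons_ind with (s := ptd).
  - intros x0. unfold Riemann_sum. simpl. change (@eq C (RtoC 0) (c * RtoC 0)). ring.
  - intros h s IH. rewrite !Riemann_sum_cons, IH. rewrite !scal_RC. change (@eq C (RtoC (SF_h s - fst h) * (c * f (snd h)) + c * Riemann_sum f s) (c * (RtoC (SF_h s - fst h) * f (snd h) + Riemann_sum f s))). ring.
Qed.

Lemma is_RInt_Cmult (c : C) (f : R -> C) a b (I : C) :
  @is_RInt C_R_NormedModule f a b I -> @is_RInt C_R_NormedModule (fun t => c * f t) a b (c * I).
Proof.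
  unfold is_RInt. intros H.
  apply filterlim_ext with (f := fun ptd => c * @scal R_Ring C_R_ModuleSpace (sign (b - a)) (@Riemann_sum C_R_ModuleSpace f ptd)).
  - intros ptd. rewrite RS_Cmult. rewrite !scal_RC. ring.
  - eapply filterlim_comp. exact H.
    apply (Cont_mult (fun _ => c) (fun u => u) I). apply Cont_const. apply Cont_id.
Qed.


Section Cyc.
Variable U : C -> Prop.
Variable cy : lifted_cycle U.
Local Notation g := (lc_path U cy).
Local Notation g' := (lc_dpath U cy).
Local Notation w := (lc_lift U cy).

Lemma g_cont (t : R) : continuous g t.
Proof.
  pose proof (ex_derive_continuous (K:=R_AbsRing) (V:=C_R_NormedModule) g t
     (ex_intro _ _ (proj1 (lc_path_C1 U cy t)))) as H.
  exact H.
Qed.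

Lemma g'_cont (t : R) : continuous g' t.
Proof. exact (proj2 (lc_path_C1 U cy t)). Qed.

Lemma w_cont (x : C) (t : R) : U x -> (0 <= t <= 1)%R -> continuous (fun s => w x s) t.
Proof.
  intros Ux Ht.
  apply (continuous_comp_2 (fun _ : R => x) (fun s : R => s) (fun a b => w a b)).
  apply continuous_const. apply continuous_id. apply (lc_lift_cont U cy x t Ux Ht).
Qed.

Lemma w_nz (x : C) (t : R) : U x -> (0 <= t <= 1)%R -> w x t <> 0.
Proof.
  intros Ux Ht E. pose proof (lc_lift_sq U cy x t Ux Ht) as Hs.
  destruct (lc_avoid U cy x t Ux Ht) as [H0 [H1 Hx]].
  rewrite E in Hs. unfold ell_cubic in Hs.
  assert (Hz : g t * (g t - 1) * (g t - x) <> 0).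
  { apply Cmult_neq_0. apply Cmult_neq_0. exact H0. apply sub1_neq. exact H1.
    intro E2. apply Hx. replace (g t) with ((g t - x) + x) by ring. rewrite E2. ring. }
  apply Hz. rewrite <- Hs. ring.
Qed.

Definition fI (e z : C) (t : R) : C := g' t / ((g t - e) * w z t).
Definition PhiB (e x z : C) (t : R) : C :=
  g' t * (g t * (g t - 1)) / ((g t - e) * w z t * w x t * (w x t + w z t)).

Lemma avoid_e (e x : C) (t : R) : U x -> (0 <= t <= 1)%R -> (e = 0 \/ e = 1 \/ e = x) -> g t - e <> 0.
Proof.
  intros Ux Ht He E. destruct (lc_avoid U cy x t Ux Ht) as [H0 [H1 Hx]].
  assert (g t = e) by (replace (g t) with ((g t - e) + e) by ring; rewrite E; ring).
  destruct He as [-> | [-> | ->]]; auto.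
Qed.

Lemma fI_cont (e z : C) (t : R) : U z -> (0 <= t <= 1)%R -> g t - e <> 0 -> continuous (fI e z) t.
Proof.
  intros Uz Ht He. unfold fI. apply Cont_div. apply g'_cont.
  apply Cont_mult. apply Cont_minus. apply g_cont. apply Cont_const. apply w_cont; assumption.
  apply Cmult_neq_0. exact He. apply w_nz; assumption.
Qed.

Lemma fI_int (e z : C) : U z -> (forall t, (0 <= t <= 1)%R -> g t - e <> 0) ->
  @is_RInt C_R_NormedModule (fI e z) 0 1 (period cy e z).
Proof.
  intros Uz He. unfold period, Cint01. fold (fI e z).
  apply (RInt_correct (V:=C_R_CompleteNormedModule)). apply ex_RInt_continuous.
  rewrite Rmin_left, Rmax_right by lra. intros t Ht. apply fI_cont; auto.
Qed.

Lemma PhiB_jcont (e x : C) (t : R) : U x -> (0 <= t <= 1)%R -> g t - e <> 0 ->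
  continuous (fun p : C * R => PhiB e x (fst p) (snd p)) (x, t).
Proof.
  intros Ux Ht He. unfold PhiB.
  assert (Cs : forall (h : R -> C), continuous h t -> continuous (fun p : C * R => h (snd p)) (x, t)).
  { intros h Hh. apply (continuous_comp (fun p : C * R => snd p) h). apply continuous_snd. exact Hh. }
  assert (Cw : continuous (fun p : C * R => w (fst p) (snd p)) (x, t)) by (apply (lc_lift_cont U cy x t Ux Ht)).
  assert (Cwx : continuous (fun p : C * R => w x (snd p)) (x, t)) by (apply Cs; apply w_cont; assumption).
  pose proof (w_nz x t Ux Ht) as Hw.
  apply Cont_div.
  - apply Cont_mult. apply Cs, g'_cont. apply Cont_mult. apply Cs, g_cont. apply Cont_minus. apply Cs, g_cont. apply Cont_const.
  - apply Cont_mult. apply Cont_mult. apply Cont_mult. apply Cont_minus. apply Cs, g_cont. apply Cont_const.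
    exact Cw. exact Cwx. apply Cont_plus. exact Cwx. exact Cw.
  - simpl. apply Cmult_neq_0. apply Cmult_neq_0. apply Cmult_neq_0. exact He. exact Hw. exact Hw.
    intro E. apply Hw. replace (w x t) with (/2 * (w x t + w x t)) by (field; apply C2_neq0). rewrite E. ring.
Qed.

Lemma PhiB_int (e x : C) : U x -> (forall t, (0 <= t <= 1)%R -> g t - e <> 0) ->
  @is_RInt C_R_NormedModule (PhiB e x x) 0 1 (Cint01 (PhiB e x x)).
Proof.
  intros Ux He. unfold Cint01.
  apply (RInt_correct (V:=C_R_CompleteNormedModule)). apply ex_RInt_continuous.
  rewrite Rmin_left, Rmax_right by lra. intros t Ht.
  apply (continuous_comp_2 (fun _ : R => x) (fun s : R => s) (fun a b => PhiB e x a b)).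
  apply continuous_const. apply continuous_id.
  apply PhiB_jcont; auto.
Qed.

Lemma fI_diff (e x z : C) (t : R) : U x -> U z -> (0 <= t <= 1)%R -> g t - e <> 0 ->
  fI e z t - fI e x t = (z - x) * PhiB e x z t.
Proof.
  intros Ux Uz Ht He. unfold fI, PhiB.
  destruct (Ceq_dec z x) as [E|Nzx].
  { subst z. ring. }
  pose proof (w_nz x t Ux Ht) as Hwx. pose proof (w_nz z t Uz Ht) as Hwz.
  pose proof (lc_lift_sq U cy x t Ux Ht) as Sx. pose proof (lc_lift_sq U cy z t Uz Ht) as Sz.
  unfold ell_cubic in Sx, Sz.
  destruct (lc_avoid U cy x t Ux Ht) as [H0 [H1 _]]. pose proof (sub1_neq _ H1) as H1'.
  assert (Hsum : w x t + w z t <> 0).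
  { intro E.
    assert (E2 : w z t = - w x t) by (replace (w z t) with ((w x t + w z t) - w x t) by ring; rewrite E; ring).
    assert (E3 : g t * (g t - 1) * (x - z) = 0).
    { replace (g t * (g t - 1) * (x - z)) with (w z t * w z t - w x t * w x t) by (rewrite Sx, Sz; ring).
      rewrite E2. ring. }
    assert (Hxz : x - z <> 0).
    { intro E4. apply Nzx. replace z with (x - (x - z)) by ring. rewrite E4. ring. }
    exfalso. exact (Cmult_neq_0 _ _ (Cmult_neq_0 _ _ H0 H1') Hxz E3). }
  assert (K : w x t - w z t = g t * (g t - 1) * (z - x) / (w x t + w z t)).
  { replace (g t * (g t - 1) * (z - x)) with (w x t * w x t - w z t * w z t) by (rewrite Sx, Sz; ring).
    field. exact Hsum. }
  transitivity (g' t / (g t - e) * ((w x t - w z t) / (w z t * w x t))).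
  { field. repeat split; assumption. }
  rewrite K. field. repeat split; assumption.
Qed.

Lemma sqrt2_pos : (0 < sqrt 2)%R.
Proof. apply sqrt_lt_R0; lra. Qed.

Lemma period_deriv (HUo : open U) (e x : C) : U x -> (forall t, (0 <= t <= 1)%R -> g t - e <> 0) ->
  is_derive (period cy e) x (Cint01 (PhiB e x x)).
Proof.
  intros Ux He. apply deriv_domin. intros eps. apply locC_abs.
  assert (Hp : (0 < eps / sqrt 2)%R) by (apply Rdiv_lt_0_compat; [apply cond_pos| apply sqrt2_pos]).
  generalize (filter_and _ _ (HUo x Ux)
    (unif_cont (PhiB e x) x (fun t Ht => PhiB_jcont e x t Ux Ht (He t Ht)) (mkposreal _ Hp))).
  apply filter_imp. intros z [Uz Hb].
  change (Cmod (period cy e z - period cy e x - (z - x) * Cint01 (PhiB e x x))%C <= eps * Cmod (z - x)%C)%R.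
  pose proof (is_RInt_minus _ _ _ _ _ _ (is_RInt_minus _ _ _ _ _ _ (fI_int e z Uz He) (fI_int e x Ux He))
     (is_RInt_Cmult (z - x) _ _ _ _ (PhiB_int e x Ux He))) as HI.
  assert (Hbd : forall t, (0 <= t <= 1)%R ->
     (@norm R_AbsRing C_R_NormedModule (minus (minus (fI e z t) (fI e x t)) ((z - x)%C * PhiB e x x t)%C) <= Cmod (z - x)%C * eps)%R).
  { intros t Ht. change (@norm R_AbsRing C_R_NormedModule (fI e z t - fI e x t - (z - x) * PhiB e x x t)%C <= Cmod (z - x)%C * eps)%R.
    rewrite norm_RC. rewrite (fI_diff e x z t Ux Uz Ht (He t Ht)).
    replace ((z - x) * PhiB e x z t - (z - x) * PhiB e x x t) with ((z - x) * (PhiB e x z t - PhiB e x x t)) by ring.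
    rewrite Cmod_mult. apply Rmult_le_compat_l. apply Cmod_ge_0.
    pose proof (C_NormedModule_mixin_compat2 _ _ _ (Hb t Ht)) as H2. simpl in H2.
    change (Cmod (PhiB e x z t - PhiB e x x t)%C < sqrt 2 * (eps / sqrt 2))%R in H2.
    replace (sqrt 2 * (eps / sqrt 2))%R with (pos eps) in H2 by (field; apply Rgt_not_eq, sqrt2_pos).
    lra. }
  pose proof (norm_RInt_le_const _ 0 1 _ _ (Rle_0_1) Hbd HI) as Hn.
  change (@norm R_AbsRing C_R_NormedModule (period cy e z - period cy e x - (z - x) * Cint01 (PhiB e x x))%C <= (1 - 0) * (Cmod (z - x)%C * eps))%R in Hn.
  rewrite norm_RC in Hn. lra.
Qed.

Lemma double_nz (a : C) : a <> 0 -> a + a <> 0.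
Proof. intros H E. apply H. replace a with (/2 * (a + a)) by (field; apply C2_neq0). rewrite E. ring. Qed.

Lemma PhiB_formula (e x : C) : U x -> (e = 0 \/ e = 1) -> x - e <> 0 ->
  Cint01 (PhiB e x x) = / (2 * (x - e)) * (period cy x x - period cy e x).
Proof.
  intros Ux He Hxe.
  assert (Hav : forall e' : C, (e' = 0 \/ e' = 1 \/ e' = x) -> forall t, (0 <= t <= 1)%R -> g t - e' <> 0).
  { intros e' He' t Ht. apply (avoid_e e' x t Ux Ht He'). }
  assert (Hex : forall t, (0 <= t <= 1)%R -> g t - x <> 0) by (apply Hav; auto).
  assert (Hee : forall t, (0 <= t <= 1)%R -> g t - e <> 0) by (apply Hav; tauto).
  pose proof (is_RInt_Cmult (/ (2 * (x - e))) _ _ _ _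
     (is_RInt_minus _ _ _ _ _ _ (fI_int x x Ux Hex) (fI_int e x Ux Hee))) as HI.
  unfold Cint01. apply (is_RInt_unique (V:=C_R_CompleteNormedModule)).
  eapply is_RInt_ext; [|exact HI].
  rewrite Rmin_left, Rmax_right by lra. intros t Ht.
  assert (Ht' : (0 <= t <= 1)%R) by lra.
  pose proof (w_nz x t Ux Ht') as Hw. pose proof (lc_lift_sq U cy x t Ux Ht') as Sx. unfold ell_cubic in Sx.
  destruct (lc_avoid U cy x t Ux Ht') as [H0 [H1 _]]. pose proof (sub1_neq _ H1) as H1'.
  pose proof (Hex t Ht') as Hx'. pose proof (Hee t Ht') as He'.
  change (/ (2 * (x - e)) * (fI x x t - fI e x t) = PhiB e x x t).
  unfold fI, PhiB.
  replace ((g t - e) * w x t * w x t * (w x t + w x t)) with ((g t - e) * (w x t * w x t) * (w x t + w x t)) by ring.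
  rewrite Sx. field. repeat split; try assumption; try apply C2_neq0; try (apply double_nz; assumption).
Qed.

Definition Qc (x a b : C) : C := a * a + a * b + b * b - (1 + x) * (a + b) + x.
Definition hsum (x : C) (t : R) : C := fI 0 x t + fI 1 x t + fI x x t.
Definition Gf (x : C) (s : R) : C := - (2 / w x s).

Lemma loc_open01 (t : R) : (0 < t < 1)%R -> locally t (fun s : R => (0 < s < 1)%R).
Proof.
  intros Ht. assert (Hp : (0 < Rmin t (1 - t))%R) by (apply Rmin_pos; lra).
  exists (mkposreal _ Hp). intros s Hs. change (Rabs (s - t) < Rmin t (1 - t))%R in Hs.
  pose proof (Rmin_l t (1 - t)). pose proof (Rmin_r t (1 - t)).
  apply Rabs_def2 in Hs. lra.
Qed.

Lemma Gf_deriv (x : C) (t : R) : U x -> (0 < t < 1)%R ->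
  @is_derive R_AbsRing C_R_NormedModule (Gf x) t (hsum x t).
Proof.
  intros Ux Ht. assert (Ht' : (0 <= t <= 1)%R) by lra.
  destruct (carath_convR g t (g' t) (proj1 (lc_path_C1 U cy t))) as [Gam [GamC [GamT GamE]]].
  set (K := fun s => 2 * Qc x (g s) (g t) / ((w x s + w x t) * w x s * w x t)).
  pose proof (w_nz x t Ux Ht') as Hwt.
  assert (Hsumc : continuous (fun s => w x s + w x t) t).
  { apply Cont_plus. apply w_cont; assumption. apply Cont_const. }
  assert (Hsum0 : w x t + w x t <> 0) by (apply double_nz; exact Hwt).
  replace (hsum x t) with (Gam t * K t).
  2:{ rewrite GamT. unfold K, hsum, fI, Qc.
      pose proof (lc_lift_sq U cy x t Ux Ht') as St. unfold ell_cubic in St.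
      destruct (lc_avoid U cy x t Ux Ht') as [H0 [H1 Hx]]. pose proof (sub1_neq _ H1) as H1'.
      pose proof (avoid_e x x t Ux Ht' (or_intror (or_intror eq_refl))) as Hx'.
      replace ((w x t + w x t) * w x t * w x t) with ((w x t * w x t) * (w x t + w x t)) by ring.
      rewrite St. replace (g t - 0) with (g t) by ring.
      field. repeat split; try assumption. }
  apply (carathR (Gf x) (fun s => Gam s * K s) t).
  - generalize (filter_and _ _ (loc_open01 t Ht) (loc_nonzero (T:=R_UniformSpace) (fun s => w x s + w x t) t Hsumc Hsum0)).
    apply filter_imp. intros s [Hs Hsn].
    assert (Hs' : (0 <= s <= 1)%R) by lra.
    pose proof (w_nz x s Ux Hs') as Hws.
    pose proof (lc_lift_sq U cy x t Ux Ht') as St. pose proof (lc_lift_sq U cy x s Ux Hs') as Ss.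
    unfold ell_cubic in St, Ss.
    replace (RtoC (s - t) * (Gam s * K s)) with ((RtoC (s - t) * Gam s) * K s) by ring.
    replace (RtoC (s - t) * Gam s) with (g s - g t) by (rewrite (GamE s); ring).
    assert (HQ : (g s - g t) * Qc x (g s) (g t) = w x s * w x s - w x t * w x t)
      by (rewrite Ss, St; unfold Qc; ring).
    unfold K, Gf.
    replace ((g s - g t) * (2 * Qc x (g s) (g t) / ((w x s + w x t) * w x s * w x t)))
      with (2 * ((g s - g t) * Qc x (g s) (g t)) / ((w x s + w x t) * w x s * w x t))
      by (field; repeat split; assumption).
    rewrite HQ. field. repeat split; assumption.
  - apply Cont_mult. exact GamC. unfold K. apply Cont_div.
    + apply Cont_mult. apply Cont_const. unfold Qc.
      assert (Hg : continuous (fun s => g s) t) by apply g_cont.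
      apply Cont_plus; [apply Cont_minus; [apply Cont_plus; [apply Cont_plus; [apply Cont_mult; [exact Hg|exact Hg]| apply Cont_mult; [exact Hg|apply Cont_const]] | apply Cont_const] | apply Cont_mult; [apply Cont_const| apply Cont_plus; [exact Hg| apply Cont_const]]] | apply Cont_const].
    + apply Cont_mult. apply Cont_mult. exact Hsumc. apply w_cont; assumption. apply Cont_const.
    + apply Cmult_neq_0. apply Cmult_neq_0. exact Hsum0. exact Hwt. exact Hwt.
Qed.

Definition clamp (s : R) : R := Rmax 0 (Rmin 1 s).

Lemma clamp_in (s : R) : (0 <= clamp s <= 1)%R.
Proof. unfold clamp, Rmax, Rmin. repeat destruct Rle_dec; lra. Qed.

Lemma clamp_id (s : R) : (0 <= s <= 1)%R -> clamp s = s.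
Proof. intros H. unfold clamp, Rmax, Rmin. repeat destruct Rle_dec; lra. Qed.

Lemma clamp_lip (s s' : R) : (Rabs (clamp s - clamp s') <= Rabs (s - s'))%R.
Proof.
  unfold clamp, Rmax, Rmin. repeat destruct Rle_dec;
  unfold Rabs; repeat destruct Rcase_abs; lra.
Qed.

Lemma clamp_cont (s : R) : continuous clamp s.
Proof.
  apply (proj2 (filterlim_locally _ _)). intros eps. exists eps. intros y Hy.
  change (Rabs (clamp y - clamp s) < eps)%R. change (Rabs (y - s) < eps)%R in Hy.
  eapply Rle_lt_trans. apply clamp_lip. exact Hy.
Qed.

Lemma hsum_cont (x : C) (t : R) : U x -> (0 <= t <= 1)%R -> continuous (hsum x) t.
Proof.
  intros Ux Ht. unfold hsum.
  apply Cont_plus. apply Cont_plus.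
  apply fI_cont; auto. apply (avoid_e 0 x t Ux Ht); auto.
  apply fI_cont; auto. apply (avoid_e 1 x t Ux Ht); auto.
  apply fI_cont; auto. apply (avoid_e x x t Ux Ht); auto.
Qed.

Lemma Gf_cont (x : C) (t : R) : U x -> (0 <= t <= 1)%R -> continuous (Gf x) t.
Proof.
  intros Ux Ht. unfold Gf. apply Cont_opp. apply Cont_div. apply Cont_const.
  apply w_cont; auto. apply w_nz; auto.
Qed.

Lemma const_near (E : R -> C) (p : R) (c : C) : continuous E p ->
  (forall d : posreal, exists s, (Rabs (s - p) < d)%R /\ E s = c) -> E p = c.
Proof.
  intros Hc Hn. apply (eq_close (V:=C_R_NormedModule)). intros eps.
  destruct (proj1 (filterlim_locally _ _) Hc eps) as [d Hd].
  destruct (Hn d) as [s [Hs Es]]. rewrite <- Es. apply Hd. exact Hs.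
Qed.

Lemma period_sum (x : C) : U x -> period cy 0 x + period cy 1 x + period cy x x = 0.
Proof.
  intros Ux.
  set (Hc := fun s => hsum x (clamp s)).
  set (Gc := fun s => Gf x (clamp s)).
  assert (HcC : forall s, continuous Hc s).
  { intros s. apply (continuous_comp clamp (hsum x)). apply clamp_cont. apply hsum_cont; auto. apply clamp_in. }
  assert (GcC : forall s, continuous Gc s).
  { intros s. apply (continuous_comp clamp (Gf x)). apply clamp_cont. apply Gf_cont; auto. apply clamp_in. }
  assert (HI : forall a b, @is_RInt C_R_NormedModule Hc a b (@RInt C_R_CompleteNormedModule Hc a b)).
  { intros a b. apply (RInt_correct (V:=C_R_CompleteNormedModule)). apply ex_RInt_continuous.
    intros z _. apply HcC. }
  set (A := fun b => @RInt C_R_CompleteNormedModule Hc 0 b).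
  assert (AC : forall b, continuous A b).
  { intros b. pose proof (is_derive_RInt (V:=C_R_NormedModule) Hc A 0 b
       (filter_forall _ (fun b0 => HI 0 b0)) (HcC b)) as Hd.
    exact (ex_derive_continuous (K:=R_AbsRing) (V:=C_R_NormedModule) A b (ex_intro _ _ Hd)). }
  set (E := fun s => A s - Gc s).
  assert (EC : forall s, continuous E s) by (intros s; apply Cont_minus; [apply AC | apply GcC]).
  assert (Emid : forall a, (0 < a < 1)%R -> E a = E (1/2)%R).
  { intros a Ha.
    assert (Hmin : (0 < Rmin a (1/2))%R) by (apply Rmin_pos; lra).
    assert (Hmax : (Rmax a (1/2) < 1)%R) by (apply Rmax_lub_lt; lra).
    assert (FT : @is_RInt C_R_NormedModule (hsum x) a (1/2) (minus (Gf x (1/2)) (Gf x a))).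
    { apply (is_RInt_derive (V:=C_R_CompleteNormedModule) (Gf x) (hsum x)).
      - intros u Hu. apply Gf_deriv; auto. lra.
      - intros u Hu. apply hsum_cont; auto. lra. }
    assert (FT' : @is_RInt C_R_NormedModule Hc a (1/2) (minus (Gf x (1/2)) (Gf x a))).
    { eapply is_RInt_ext; [|exact FT]. intros u Hu. unfold Hc. rewrite clamp_id; auto.
      pose proof (Rmin_l a (1/2)). pose proof (Rmax_l a (1/2)). lra. }
    pose proof (is_RInt_unique (V:=C_R_CompleteNormedModule) _ _ _ _ (is_RInt_Chasles Hc 0 a (1/2) _ _ (HI 0 a) FT')) as Eq.
    unfold E, A, Gc. rewrite Eq. rewrite !clamp_id by lra.
    change (@eq C (@RInt C_R_CompleteNormedModule Hc 0 a - Gf x a) (@RInt C_R_CompleteNormedModule Hc 0 a + (Gf x (1/2)%R - Gf x a) - Gf x (1/2)%R)). ring. }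
  assert (E1 : E 1%R = E (1/2)%R).
  { apply const_near. apply EC. intros d. exists (Rmax (1/2) (1 - d/2)).
    pose proof (cond_pos d). pose proof (Rmax_l (1/2) (1 - d/2)). pose proof (Rmax_r (1/2) (1 - d/2)).
    assert (Hm : (Rmax (1/2) (1 - d/2) < 1)%R) by (apply Rmax_lub_lt; lra).
    split. rewrite Rabs_left by lra. lra. apply Emid. lra. }
  assert (E0 : E 0%R = E (1/2)%R).
  { apply const_near. apply EC. intros d. exists (Rmin (1/2) (d/2)).
    pose proof (cond_pos d). pose proof (Rmin_l (1/2) (d/2)). pose proof (Rmin_r (1/2) (d/2)).
    assert (Hm : (0 < Rmin (1/2) (d/2))%R) by (apply Rmin_pos; lra).
    split. rewrite Rminus_0_r, Rabs_right by lra. lra. apply Emid. lra. }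
  assert (A0 : A 0%R = RtoC 0).
  { unfold A. rewrite RInt_point. reflexivity. }
  assert (A1 : A 1%R = @RInt C_R_CompleteNormedModule (hsum x) 0 1).
  { unfold A. apply RInt_ext. intros u Hu. rewrite Rmin_left, Rmax_right in Hu by lra.
    unfold Hc. rewrite clamp_id by lra. reflexivity. }
  assert (Gc01 : Gc 1%R = Gc 0%R).
  { unfold Gc, Gf. rewrite !clamp_id by lra. rewrite (lc_lift_closed U cy x Ux). reflexivity. }
  assert (Hz : @RInt C_R_CompleteNormedModule (hsum x) 0 1 = RtoC 0).
  { assert (E10 : E 1%R = E 0%R) by (rewrite E1, E0; reflexivity).
    unfold E in E10. rewrite A0, Gc01 in E10.
    rewrite <- A1.
    assert (Hv : forall v c : C, v - c = RtoC 0 - c -> v = RtoC 0).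
    { intros v c Hv. replace v with ((v - c) + c) by ring. rewrite Hv. ring. }
    exact (Hv _ _ E10). }
  assert (HP : @is_RInt C_R_NormedModule (hsum x) 0 1 (period cy 0 x + period cy 1 x + period cy x x)).
  { apply (is_RInt_plus (fun t => fI 0 x t + fI 1 x t) (fI x x)).
    apply (is_RInt_plus (fI 0 x) (fI 1 x)).
    apply fI_int; auto. intros t Ht. apply (avoid_e 0 x t Ux Ht); auto.
    apply fI_int; auto. intros t Ht. apply (avoid_e 1 x t Ux Ht); auto.
    apply fI_int; auto. intros t Ht. apply (avoid_e x x t Ux Ht); auto. }
  pose proof (is_RInt_unique (V:=C_R_CompleteNormedModule) _ _ _ _ HP) as HU. rewrite HU in Hz. exact Hz.
Qed.

Lemma period_deriv01 (HUo : open U) (HU01 : forall x, U x -> x <> 0 /\ x <> 1) (x : C) : U x ->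
  is_derive (period cy 0) x (- (2 * period cy 0 x + period cy 1 x) / (2 * x)) /\
  is_derive (period cy 1) x (- (period cy 0 x + 2 * period cy 1 x) / (2 * (x - 1))).
Proof.
  intros Ux. destruct (HU01 x Ux) as [Hx0 Hx1]. pose proof (sub1_neq _ Hx1) as Hx1'.
  pose proof (period_sum x Ux) as Hs.
  assert (HPx : period cy x x = - (period cy 0 x + period cy 1 x)).
  { replace (period cy x x) with ((period cy 0 x + period cy 1 x + period cy x x) - (period cy 0 x + period cy 1 x)) by ring.
    rewrite Hs. ring. }
  split.
  - eapply Dval. apply period_deriv; auto. intros t Ht. apply (avoid_e 0 x t Ux Ht); auto.
    rewrite PhiB_formula; auto. rewrite HPx. field. exact Hx0.
    replace (x - 0) with x by ring. exact Hx0.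
  - eapply Dval. apply period_deriv; auto. intros t Ht. apply (avoid_e 1 x t Ux Ht); auto.
    rewrite PhiB_formula; auto. rewrite HPx. field. exact Hx1'.
Qed.

End Cyc.

Theorem mainTheorem5
  (U : C -> Prop) (HUopen : open U) (HU01 : forall x, U x -> x <> 0 /\ x <> 1)
  (A B : lifted_cycle U) (c1 c2 : C) :
  let a1 := fun x => c1 * period A 0 x + c2 * period B 0 x in
  let a2 := fun x => c1 * period A 1 x + c2 * period B 1 x in
  let y := fun x => x * a1 x / (x * a1 x + (x - 1) * a2 x) in
  forall x : C, U x -> x * a1 x + (x - 1) * a2 x <> 0 ->
    exists y1 y2 : C,
      is_derive y x y1 /\
      (exists dy : C -> C,
         locally x (fun z => is_derive y z (dy z)) /\
         is_derive dy x y2) /\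
      (y x <> 0 -> y x <> 1 -> y x <> x ->
         PVI (/ 8) (- / 8) (/ 8) (3 / 8) x (y x) y1 y2).
Proof.
  intros a1 a2.
  assert (Ha1 : forall z, U z -> is_derive a1 z (- (2 * a1 z + a2 z) / (2 * z))).
  { intros z Uz. destruct (HU01 z Uz) as [Hz0 Hz1].
    destruct (period_deriv01 U A HUopen HU01 z Uz) as [dA0 dA1].
    destruct (period_deriv01 U B HUopen HU01 z Uz) as [dB0 dB1].
    unfold a1, a2. eapply Dval.
    apply Dplus. apply Dmult. apply Dconst. exact dA0. apply Dmult. apply Dconst. exact dB0.
    cbv beta. field. exact Hz0. }
  assert (Ha2 : forall z, U z -> is_derive a2 z (- (a1 z + 2 * a2 z) / (2 * (z - 1)))).
  { intros z Uz. destruct (HU01 z Uz) as [Hz0 Hz1]. pose proof (sub1_neq _ Hz1) as Hz1'.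
    destruct (period_deriv01 U A HUopen HU01 z Uz) as [dA0 dA1].
    destruct (period_deriv01 U B HUopen HU01 z Uz) as [dB0 dB1].
    unfold a1, a2. eapply Dval.
    apply Dplus. apply Dmult. apply Dconst. exact dA1. apply Dmult. apply Dconst. exact dB1.
    cbv beta. field. exact Hz1'. }
  intros y x Ux HD.
  exact (final_alg U a1 a2 HUopen HU01 Ha1 Ha2 x Ux HD).
Qed.
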